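(* For $i\in\{1,\dots,m\}$ let $X_i\sim\operatorname{Ber}(p_i,s_i)$ with $p_i\in[0,1)$, $s_i>0$, and let $P_i\sim\operatorname{Poi}\!\left(\ln\frac{1}{1-p_i},\bar s_i\right)$ with $\bar s_i\ge s_i$, all these $2m$ variables being independent. Let $B=\sum_{i=1}^m X_i$ and $P=\sum_{i=1}^m P_i$. Then $\mathbb{P}(B>1)\le\mathbb{P}(P>1)$.
   Context: For $s>0$: $X\sim\operatorname{Ber}(p,s)$ means $X=sZ$ with $Z\sim\operatorname{Ber}(p)$ (Bernoulli), and $P\sim\operatorname{Poi}(\lambda,s)$ means $P=sZ$ with $Z\sim\operatorname{Poi}(\lambda)$ (Poisson with mean $\lambda$). *)

(* Defs.v *)
From HB Require Import structures.
From mathcomp Require Import all_boot all_order all_algebra.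
From mathcomp Require Import all_classical all_reals all_analysis.
Set Implicit Arguments. Unset Strict Implicit. Unset Printing Implicit Defensive.
Import Order.TTheory GRing.Theory Num.Theory.
Local Open Scope classical_set_scope.
Local Open Scope ring_scope.

Definition mutually_independent {d : measure_display} {T : measurableType d}
  {R : realType} (P : probability T R) {I : finType} (Y : I -> T -> R) : Prop :=
  forall (J : {set I}) (A : I -> set R),
    (forall j, measurable (A j)) ->
    P [set t | forall j, j \in J -> A j (Y j t)] =
    (\prod_(j in J) P (Y j @^-1` A j))%E.

(* Main.v *)
Require Import Defs.
From HB Require Import structures.
From mathcomp Require Import all_boot all_order all_algebra.
From mathcomp Require Import all_classical all_reals all_analysis.
From mathcomp Require Import measurable_realfun.
Import Order.TTheory GRing.Theory Num.Theory.
Local Open Scope classical_set_scope.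
Local Open Scope ring_scope.

Theorem lemma3 (R : realType) (d : measure_display) (T : measurableType d)
  (P : probability T R) (m : nat)
  (p s sbar : 'I_m -> R)
  (Z : 'I_m -> {RV P >-> bool}) (W : 'I_m -> {RV P >-> nat})
  (X Pv : 'I_m -> T -> R) :
  (forall i, 0 <= p i < 1) ->
  (forall i, 0 < s i) ->
  (forall i, s i <= sbar i) ->
  (forall i, distribution P (Z i) = bernoulli_prob (p i)) ->
  (forall i, distribution P (W i) = poisson_prob (ln ((1 - p i)^-1)) 0%N) ->
  (forall i t, X i t = s i * (Z i t)%:R) ->
  (forall i t, Pv i t = sbar i * (W i t)%:R) ->
  mutually_independent P
    (fun j : 'I_m + 'I_m => match j with inl i => X i | inr i => Pv i end) ->
  (P [set t | (1 < \sum_(i < m) X i t)%R] <= P [set t | (1 < \sum_(i < m) Pv i t)%R])%E.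
Proof.
move=> hp hs hsb hZ hW hX hPv hind.
have sb0 : forall i, 0 < sbar i by move=> i; apply: lt_le_trans (hs i) (hsb i).
have X0 : forall i, X i @^-1` [set 0] = Z i @^-1` [set false].
  move=> k; apply/seteqP; split=> [t|t] /=; rewrite hX; case: (Z k t) => //=.
  - by rewrite mulr1 => /eqP; rewrite gt_eqF.
  - by rewrite mulr0.
have Pv0 : forall i, Pv i @^-1` [set 0] = W i @^-1` [set 0%N].
  move=> k; apply/seteqP; split=> [t|t] /=; rewrite hPv.
    by move/eqP; rewrite mulf_eq0 gt_eqF //= pnatr_eq0 => /eqP.
  by move=> ->; rewrite mulr0.
have mX0 : forall i, measurable (X i @^-1` [set 0]) by move=> i; rewrite X0; exact: measurable_funPTI.
have mPv0 : forall i, measurable (Pv i @^-1` [set 0]) by move=> i; rewrite Pv0; exact: measurable_funPTI.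
have PX0 : forall i, P (X i @^-1` [set 0]) = P (Pv i @^-1` [set 0]).
  move=> i; rewrite X0 Pv0.
  have -> : P (Z i @^-1` [set false]) = distribution P (Z i) [set false] by [].
  have -> : P (W i @^-1` [set 0%N]) = distribution P (W i) [set 0%N] by [].
  rewrite hZ hW.
  have /andP[p0 p1] := hp i.
  rewrite bernoulli_probE ?p0 ?(ltW p1) // !diracE /=.
  rewrite (@memNset _ [set false] true) // (@mem_set _ [set false] false) //.
  rewrite mule0 add0e mule1.
  rewrite /poisson_prob; case: ifPn => [lp|].
    rewrite esum_set1; last by rewrite lee_fin poisson_pmf_ge0.
    rewrite /poisson_pmf lp expr0 fact0 invr1 !mul1r lnV ?posrE ?subr_gt0 //.
    rewrite opprK lnK ?posrE ?subr_gt0 //.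
  rewrite -leNgt => lp.
  have pe : p i = 0.
    move: p0; rewrite le_eqVlt => /orP[/eqP <- //|pp].
    exfalso; move: lp; apply/negP; rewrite -ltNge; apply: ln_gt0.
    by rewrite invf_gt1 ?subr_gt0 // ltrBlDr ltrDl.
  by rewrite diracE (@mem_set _ [set 0%N] 0%N) // pe /unstable.onem subr0.
have PXC : forall k, P (X k @^-1` ~` [set 0]) = P (Pv k @^-1` ~` [set 0]).
  by move=> k; rewrite -!preimage_setC !probability_setC // PX0.
pose SA (A : {set 'I_m}) (k : 'I_m) : set R :=
  if k \in A then ~` [set 0] else [set 0].
have mSA : forall A k, measurable (SA A k).
  by move=> A k; rewrite /SA; case: ifP => _ //; apply: measurableC.
have memSA : forall A k (x : R), SA A k x <-> ((k \in A) = (x != 0)).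
  move=> A k x; rewrite /SA; case: (k \in A) => /=; split.
  - by move=> h; apply/esym/negP => /eqP.
  - by move=> /esym /negP h e; apply: h; apply/eqP.
  - by move=> ->; rewrite eqxx.
  - by move=> /esym /negbFE /eqP.
have mXS : forall A k, measurable (X k @^-1` SA A k).
  move=> A k; rewrite /SA; case: ifP => _ //.
  by rewrite -preimage_setC; apply: measurableC.
have mPS : forall A k, measurable (Pv k @^-1` SA A k).
  move=> A k; rewrite /SA; case: ifP => _ //.
  by rewrite -preimage_setC; apply: measurableC.
pose EX A := \bigcap_(k in [set: 'I_m]) (X k @^-1` SA A k).
pose EP A := \bigcap_(k in [set: 'I_m]) (Pv k @^-1` SA A k).
have mEX : forall A, measurable (EX A).
  by move=> A; apply: fin_bigcap_measurable => // k _; exact: mXS.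
have mEP : forall A, measurable (EP A).
  by move=> A; apply: fin_bigcap_measurable => // k _; exact: mPS.
have PEXP : forall A, P (EX A) = P (EP A).
  move=> A.
  pose Aj (j : 'I_m + 'I_m) := match j with inl k => SA A k | inr k => SA A k end.
  have mAj : forall j, measurable (Aj j) by case => k; exact: mSA.
  have h1 := hind (inl @: [set: 'I_m])%SET Aj mAj.
  have h2 := hind (inr @: [set: 'I_m])%SET Aj mAj.
  rewrite big_imset /= in h1; last by move=> x y _ _ [].
  rewrite big_imset /= in h2; last by move=> x y _ _ [].
  have -> : EX A = [set t | forall j, j \in (inl @: [set: 'I_m])%SET ->
     Aj j ((fun j : 'I_m + 'I_m => match j with inl i => X i | inr i => Pv i end) j t)].
    apply/seteqP; split=> [t|t] /=.
    - by move=> h j /imsetP[k _ ->]; apply: h.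
    - by move=> h k _; apply: (h (inl k)); apply: imset_f; rewrite inE.
  have -> : EP A = [set t | forall j, j \in (inr @: [set: 'I_m])%SET ->
     Aj j ((fun j : 'I_m + 'I_m => match j with inl i => X i | inr i => Pv i end) j t)].
    apply/seteqP; split=> [t|t] /=.
    - by move=> h j /imsetP[k _ ->]; apply: h.
    - by move=> h k _; apply: (h (inr k)); apply: imset_f; rewrite inE.
  rewrite h1 h2; apply: eq_bigr => k _ /=.
  by rewrite /Aj /SA; case: ifP => _; [exact: PXC | exact: PX0].
pose D := [set A : {set 'I_m} | 1 < \sum_(k in A) s k].
have EXE : forall A t, EX A t <-> forall k, (k \in A) = (X k t != 0).
  move=> A t; split => /= h k; first by apply/memSA; apply: h.
  by move=> _; apply/memSA; apply: h.
have EPE : forall A t, EP A t <-> forall k, (k \in A) = (Pv k t != 0).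
  move=> A t; split => /= h k; first by apply/memSA; apply: h.
  by move=> _; apply/memSA; apply: h.
have sumX : forall (A : {set 'I_m}) t, (forall k, (k \in A) = (X k t != 0)) ->
    \sum_(k < m) X k t = \sum_(k in A) s k.
  move=> A t h; rewrite [RHS]big_mkcond /=; apply: eq_bigr => k _.
  rewrite h; move: (hX k t); case: (Z k t) => /= ->.
    by rewrite mulr1 gt_eqF.
  by rewrite mulr0 eqxx.
have eqX : [set t | (1 < \sum_(i < m) X i t)%R] = \bigcup_(A in D) EX A.
  apply/seteqP; split=> [t|t] /=.
  - move=> h; exists [set k | X k t != 0]%SET; last first.
      by apply/EXE => k; rewrite inE.
    by rewrite /D /= -(sumX _ t) // => k; rewrite inE.
  - by move=> [A DA /EXE h]; rewrite (sumX A t h).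
have subP : \bigcup_(A in D) EP A `<=` [set t | (1 < \sum_(i < m) Pv i t)%R].
  move=> t [A DA /EPE h] /=; apply: (lt_le_trans DA).
  rewrite big_mkcond /=; apply: ler_sum => k _.
  rewrite h hPv; have := sb0 k; have := hsb k.
  case: (W k t) => [|n] /=; first by rewrite mulr0 eqxx.
  rewrite mulf_eq0 gt_eqF // pnatr_eq0 /= => hsk sk0.
  apply: (le_trans hsk); rewrite -{1}[sbar k]mulr1; apply: ler_wpM2l; first exact: ltW.
  by rewrite ler1n.
have trX : trivIset D EX.
  move=> A B _ _ [t [/EXE hA /EXE hB]]; apply/setP => k.
  by rewrite hA hB.
have trP : trivIset D EP.
  move=> A B _ _ [t [/EPE hA /EPE hB]]; apply/setP => k.
  by rewrite hA hB.
have mPv : measurable [set t | (1 < \sum_(i < m) Pv i t)%R].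
  have mPvk : forall k, measurable_fun setT (Pv k).
    move=> k; rewrite (_ : Pv k = fun t => sbar k * (W k t)%:R); last first.
      by apply/funext => t; rewrite hPv.
    apply: measurable_funM => //.
    exact: measurableT_comp (measurable_funPT (W k)).
  have := @measurable_sum _ _ _ setT _ (index_enum 'I_m) Pv mPvk measurableT
    _ (measurable_itv `]1%R, +oo[%O).
  rewrite setTI; congr measurable; apply/seteqP; split=> [t|t] /=.
    by rewrite in_itv /= andbT.
    by rewrite in_itv /= andbT.
rewrite eqX measure_fin_bigcup //; last exact: finite_finset.
rewrite (eq_fsbigr (fun A => P (EP A))); last by move=> A _; exact: PEXP.
rewrite -measure_fin_bigcup //; last exact: finite_finset.
apply: le_measure => //; rewrite inE //.
by apply: fin_bigcup_measurable => //; exact: finite_finset.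
Qed.
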